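(* Let $B_1,B_2$ be two commuting nilpotent operators on a finite-dimensional complex vector space $V$. Then there exist a nilpotent operator $B_2'$ on $V$ and a vector $w\in V$ such that (i) $B_2'$ commutes with $B_1$; (ii) every linear combination $\alpha B_2+\beta B_2'$ ($\alpha,\beta\in\mathbb C$) is nilpotent; (iii) $w$ is a cyclic vector for the pair $(B_1,B_2')$, i.e. no proper subspace of $V$ invariant under $B_1$ and $B_2'$ contains $w$. *)

(* Defs.v *)
From mathcomp Require Import all_boot all_order all_algebra.
Set Implicit Arguments. Unset Strict Implicit. Unset Printing Implicit Defensive.
Import GRing.Theory.
Local Open Scope ring_scope.

(* Operators on V = 'rV[C]_n are n x n matrices acting on row vectors on the
   right (v |-> v *m A); subspaces of V are row spaces of matrices (mxalgebra). *)

Definition nilpotent_mx (C : nzRingType) (n : nat) (A : 'M[C]_n) : Prop :=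
  exists k : nat, A ^+ k = 0.

Definition cyclic_pair (C : fieldType) (n : nat) (A B : 'M[C]_n) (w : 'rV[C]_n)
  : Prop :=
  forall U : 'M[C]_n,
    (w <= U)%MS -> (U *m A <= U)%MS -> (U *m B <= U)%MS -> (1%:M <= U)%MS.

(* Main.v *)
Require Import Defs.
From mathcomp Require Import all_boot all_order all_algebra.
Set Implicit Arguments. Unset Strict Implicit. Unset Printing Implicit Defensive.
Import GRing.Theory.
Local Open Scope ring_scope.

Section LiftSec.
Variables (F : fieldType) (n : nat).
Implicit Types (A B M : 'M[F]_n).

Lemma mxpowS M j : M ^+ j.+1 = M *m M ^+ j.
Proof. by rewrite exprS mulmxE. Qed.
Lemma mxpowSr M j : M ^+ j.+1 = M ^+ j *m M.
Proof. by rewrite exprSr mulmxE. Qed.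
Lemma mxpow0 M : M ^+ 0 = 1%:M.
Proof. by []. Qed.

Lemma subB p q (A B : 'M[F]_(p, n)) (C : 'M[F]_(q, n)) : (A <= C)%MS -> (B <= C)%MS -> (A - B <= C)%MS.
Proof. by move=> hA hB; rewrite addmx_sub // eqmx_opp. Qed.

Lemma nakayama (S A M : 'M[F]_n) p : (S <= A + S *m M)%MS -> (A *m M <= A)%MS -> M ^+ p = 0 -> (S <= A)%MS.
Proof.
move=> hS hA hp.
have H : forall j, (S <= A + S *m M ^+ j)%MS.
  elim=> [|j IH]; first by rewrite mxpow0 mulmx1 addsmxSr.
  apply: (submx_trans hS); rewrite addsmx_sub addsmxSl /=.
  have := submxMr M IH; move/submx_trans; apply.
  rewrite addsmxMr addsmx_sub; apply/andP; split.
    exact: submx_trans hA (addsmxSl _ _).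
  by rewrite mxpowSr mulmxA addsmxSr.
by have := H p; rewrite hp mulmx0 addsmx0.
Qed.

Variable B1 : 'M[F]_n.
Local Notation S j := (B1 ^+ j).
Local Notation K k := (kermx (B1 ^+ k)).
Definition P j := locked (pinvmx (S j.+1) *m S j).

Lemma SB1 j : S j *m B1 = S j.+1. Proof. by rewrite mxpowSr. Qed.
Lemma Ssub j : (S j.+1 <= S j)%MS. Proof. by rewrite mxpowS submxMl. Qed.
Lemma subMB1 (A : 'M[F]_n) j : (A <= S j)%MS -> (A *m B1 <= S j.+1)%MS.
Proof. by move/(submxMr B1); rewrite SB1. Qed.
Lemma liftK (A : 'M[F]_n) j : (A <= S j.+1)%MS -> A *m P j *m B1 = A.
Proof. by move=> h; rewrite /P -lock -mulmxA -(mulmxA (pinvmx _)) SB1 mulmxA mulmxKpV. Qed.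
Lemma liftS (A : 'M[F]_n) j : (A *m P j <= S j)%MS.
Proof. by rewrite /P -lock mulmxA submxMl. Qed.


Lemma kill (A : 'M[F]_n) j : (A <= (S j :&: K 1) + S j.+1)%MS -> (A *m B1 <= S j.+2)%MS.
Proof.
move/(submxMr B1); move/submx_trans; apply; rewrite addsmxMr addsmx_sub SB1 submx_refl andbT.
have /sub_kermxP : ((S j :&: K 1) <= K 1)%MS by exact: capmxSr.
by rewrite expr1 => ->; rewrite sub0mx.
Qed.

Definition Lift j := forall F0 : 'M[F]_n,
  (S j *m F0 <= S j)%MS -> (S j.+1 *m F0 <= S j.+1)%MS ->
  (forall k, ((S j :&: K k) *m F0 <= (S j :&: K k) + S j.+1)%MS) ->
  exists X : 'M[F]_n, [/\ (S j *m X <= S j)%MS, S j *m (X *m B1 - B1 *m X) = 0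
                        & (S j *m (X - F0) <= S j.+1)%MS].

Lemma Lift_base j : S j = 0 -> Lift j.
Proof.
move=> h F0 _ _ _; exists 0; rewrite h !mul0mx sub0mx; split => //; exact: sub0mx.
Qed.

Lemma Lift_step j : Lift j.+1 -> Lift j.
Proof.
move=> IH F0 l1 l2 l3.
set F' := P j *m F0 *m B1.
have [X' [x1 x2 x3]] : exists X' : 'M[F]_n, [/\ (S j.+1 *m X' <= S j.+1)%MS,
     S j.+1 *m (X' *m B1 - B1 *m X') = 0 & (S j.+1 *m (X' - F') <= S j.+2)%MS].
  apply: IH.
  - rewrite /F' !mulmxA; apply: subMB1.
    apply: submx_trans (submxMr F0 (liftS _ _)) l1.
  - set u := S j.+2; set v := u *m P j.+1.
    have hv : (v <= S j.+1)%MS by exact: liftS.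
    have hvB : v *m B1 = u by rewrite /v liftK.
    have he : (u *m P j - v <= S j :&: K 1)%MS.
      rewrite sub_capmx subB ?liftS ?(submx_trans hv (Ssub _)) //=.
      by apply/sub_kermxP; rewrite expr1 mulmxBl hvB liftK ?Ssub ?subrr.
    have -> : u *m F' = v *m F0 *m B1 + (u *m P j - v) *m F0 *m B1.
      by rewrite /F' -!mulmxDl addrC subrK !mulmxA.
    rewrite addmx_sub //; first exact: subMB1 (submx_trans (submxMr F0 hv) l2).
    apply: kill; apply: submx_trans (submxMr F0 he) (l3 1%N).
  - move=> k; set u := (S j.+1 :&: K k)%MS.
    have hu : (u *m P j <= S j :&: K k.+1)%MS.
      rewrite sub_capmx liftS /=; apply/sub_kermxP.
      rewrite mxpowS mulmxA liftK ?capmxSl //.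
      by apply/sub_kermxP; exact: capmxSr.
    rewrite /F' !mulmxA; have := submxMr B1 (submx_trans (submxMr F0 hu) (l3 k.+1)).
    move/submx_trans; apply; rewrite addsmxMr SB1; apply: addsmxS => //.
    rewrite sub_capmx subMB1 ?capmxSl //=; apply/sub_kermxP.
    by rewrite -mulmxA -mxpowS; apply/sub_kermxP; exact: capmxSr.
pose Cc := (S j :\: S j.+1)%MS.
have dir1 : (S j.+1 :&: Cc = 0)%MS by rewrite capmxC capmx_diff.
have dir2 : (Cc :&: S j.+1 = 0)%MS by rewrite capmx_diff.
have cover : (S j <= S j.+1 + Cc)%MS.
  have := addsmx_diff_cap_eq (S j) (S j.+1); move/eqmxP; case/andP => _.
  move/submx_trans; apply; rewrite addsmxC addsmxS //.
  by have /capmx_idPr -> := Ssub j.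
pose G := F0 + (B1 *m X' - F0 *m B1) *m P j.+1.
pose X := proj_mx (S j.+1) Cc *m X' + proj_mx Cc (S j.+1) *m G.
have p1 : forall A : 'M[F]_n, (A <= S j.+1)%MS -> A *m X = A *m X'.
  move=> A hA; rewrite /X mulmxDr (mulmxA A) (mulmxA A) proj_mx_id // proj_mx_0 //.
  by rewrite mul0mx addr0.
have p2 : forall A : 'M[F]_n, (A <= Cc)%MS -> A *m X = A *m G.
  move=> A hA; rewrite /X mulmxDr (mulmxA A) (mulmxA A) proj_mx_0 // proj_mx_id //.
  by rewrite mul0mx add0r.
pose A1 := S j *m proj_mx (S j.+1) Cc; pose A2 := S j *m proj_mx Cc (S j.+1).
have hA : A1 + A2 = S j by rewrite add_proj_mx.
have hA1 : (A1 <= S j.+1)%MS by exact: proj_mx_sub.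
have hA2 : (A2 <= Cc)%MS by exact: proj_mx_sub.
have hA2' : (A2 <= S j)%MS by apply: submx_trans hA2 (diffmxSl _ _).
have hSX : S j *m X = A1 *m X' + A2 *m G by rewrite -{1}hA mulmxDl p1 // p2.
have kd : (A2 *m (B1 *m X' - F0 *m B1) <= S j.+2)%MS.
  set c := A2.
  have hcB : (c *m B1 <= S j.+1)%MS by exact: subMB1.
  have he : (c *m B1 *m P j - c <= S j :&: K 1)%MS.
    rewrite sub_capmx subB ?liftS //=.
    by apply/sub_kermxP; rewrite expr1 mulmxBl liftK ?subrr.
  have -> : c *m (B1 *m X' - F0 *m B1) =
     c *m B1 *m (X' - F') + (c *m B1 *m P j - c) *m F0 *m B1.
    by rewrite /F' !mulmxBr !mulmxBl !mulmxA addrA subrK.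
  rewrite addmx_sub //.
    by apply: submx_trans (submxMr _ hcB) x3.
  by apply: kill; apply: submx_trans (submxMr F0 he) (l3 1%N).
have kdK : A2 *m (B1 *m X' - F0 *m B1) *m P j.+1 *m B1 = A2 *m (B1 *m X' - F0 *m B1).
  by rewrite liftK.
exists X; split.
- rewrite hSX /G addmx_sub //.
    exact: submx_trans (submxMr _ hA1) (submx_trans x1 (Ssub _)).
  rewrite mulmxDr addmx_sub //.
    exact: submx_trans (submxMr _ hA2') l1.
  by rewrite mulmxA; apply: submx_trans (liftS _ _) (Ssub _).
- apply/eqP; rewrite mulmxBr subr_eq0; apply/eqP.
  rewrite mulmxA hSX mulmxA SB1 p1 // -SB1 -hA.
  rewrite !mulmxDl /G (mulmxDr A2 F0) (mulmxDl (A2 *m F0)) (mulmxA A2 _ (P j.+1)) kdK.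
  have -> : A1 *m X' *m B1 = A1 *m B1 *m X'.
    case/submxP: hA1 => D ->; rewrite -!mulmxA; congr (D *m _).
    by apply/eqP; rewrite -subr_eq0 -mulmxBr x2.
  by congr (_ + _); rewrite mulmxBr !mulmxA addrC subrK.
- rewrite mulmxBr hSX.
  have -> : A1 *m X' + A2 *m G - S j *m F0 =
     A1 *m X' - A1 *m F0 + A2 *m ((B1 *m X' - F0 *m B1) *m P j.+1).
    rewrite -hA mulmxDl /G (mulmxDr A2 F0) opprD addrACA; congr (_ + _).
    by rewrite addrAC subrr add0r.
  rewrite addmx_sub // ?subB //.
  - exact: submx_trans (submxMr _ hA1) x1.
  - exact: submx_trans (submxMr _ hA1) l2.
  - by rewrite mulmxA liftS.
Qed.

Lemma Lift_all d j : S (j + d) = 0 -> Lift j.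
Proof.
elim: d j => [|d IHd] j h; first by apply: Lift_base; rewrite addn0 in h.
apply: Lift_step; apply: IHd; by rewrite addSnnS.
Qed.

End LiftSec.

Section Flag.
Variables (F : fieldType) (n : nat).


Lemma pow_agree (S1 Y Y1 : 'M[F]_n) :
  (forall A : 'M[F]_n, (A <= S1)%MS -> A *m Y = A *m Y1) -> (S1 *m Y1 <= S1)%MS ->
  forall j (A : 'M[F]_n), (A <= S1)%MS -> A *m Y ^+ j = A *m Y1 ^+ j.
Proof.
move=> h1 h2; elim=> [|j IH] A hA; first by [].
rewrite !mxpowS !mulmxA h1 // IH //.
exact: submx_trans (submxMr _ hA) h2.
Qed.

Variables (B1 B2 : 'M[F]_n) (m p2 : nat).
Hypothesis hB1 : B1 ^+ m = 0.
Hypothesis hB2 : B2 ^+ p2 = 0.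
Hypothesis hc : B1 *m B2 = B2 *m B1.
Local Notation K k := (kermx (B1 ^+ k)).
Local Notation H k := (kermx (B1 ^+ k) + B1)%MS.

Lemma commX k : B1 ^+ k *m B2 = B2 *m B1 ^+ k.
Proof.
have : GRing.comm B2 (B1 ^+ k) by apply: commrX; rewrite /GRing.comm -!mulmxE hc.
by rewrite /GRing.comm -!mulmxE.
Qed.

Lemma KB2 k : (K k *m B2 <= K k)%MS.
Proof. by apply/sub_kermxP; rewrite -mulmxA -commX mulmxA mulmx_ker mul0mx. Qed.

Lemma HB2 k : (H k *m B2 <= H k)%MS.
Proof.
rewrite addsmxMr addsmxS ?KB2 //.
by rewrite hc submxMl.
Qed.

Lemma Kmono k l : (k <= l)%N -> (K k <= K l)%MS.
Proof.
move=> hkl; apply/sub_kermxP; rewrite -(subnKC hkl) exprD -mulmxE mulmxA.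
by rewrite mulmx_ker mul0mx.
Qed.

Lemma H0sub : (H 0 <= B1)%MS.
Proof.
rewrite addsmx_sub submx_refl andbT.
have := mulmx_ker (B1 ^+ 0); rewrite mxpow0 mulmx1 => ->; exact: sub0mx.
Qed.

Lemma Hbig k : (m <= k)%N -> (1%:M <= H k)%MS.
Proof.
move=> hk; apply: submx_trans (addsmxSl _ _).
apply/sub_kermxP; rewrite -(subnKC hk) exprD hB1 mul0r mulmx0 //.
Qed.

Definition flag_prop (S : 'M[F]_n) :=
  exists (F0 : 'M[F]_n) (w : 'rV[F]_n),
  [/\ (w <= S)%MS && (S *m F0 <= S)%MS, (B1 *m F0 <= B1)%MS,
      (forall k, ((S :&: K k) *m F0 <= H k)%MS),
      (forall U : 'M[F]_n, (w <= U)%MS -> (U *m F0 <= U + B1)%MS -> (S <= U + B1)%MS) &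
      exists N, forall a b : F, (S *m (a *: B2 + b *: F0) ^+ N <= B1)%MS].

Lemma flag_base (S : 'M[F]_n) : (S <= B1)%MS -> flag_prop S.
Proof.
move=> hS; exists 0, 0; split.
- by rewrite sub0mx mulmx0 sub0mx.
- by rewrite mulmx0 sub0mx.
- by move=> k; rewrite mulmx0 sub0mx.
- by move=> U _ _; apply: submx_trans hS (addsmxSr _ _).
- by exists 0%N => a b; rewrite mxpow0 mulmx1.
Qed.

Lemma flag_step (S : 'M[F]_n) : ~~ (S <= B1)%MS -> (B1 <= S)%MS -> (S *m B2 <= S)%MS ->
  (forall S1 : 'M[F]_n, (\rank S1 < \rank S)%N -> (B1 <= S1)%MS -> (S1 *m B2 <= S1)%MS -> flag_prop S1) ->
  flag_prop S.
Proof.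
move=> nSB1 B1S SB2 IH.
have ex0 : exists k, ~~ (S <= H k)%MS.
  by exists 0%N; apply: contra nSB1 => h; apply: submx_trans h H0sub.
have ub : forall k, ~~ (S <= H k)%MS -> (k <= m)%N.
  move=> k; apply: contraR; rewrite -ltnNge => /ltnW hk.
  exact: submx_trans (submx1 _) (Hbig hk).
case: (ex_maxnP ex0 ub) => k0 nSH maxk0.
pose T := (B1 + S *m B2 + S :&: H k0)%MS.
have TS : (T <= S)%MS by rewrite !addsmx_sub B1S SB2 capmxSl.
have nST : ~~ (S <= T)%MS.
  apply: contra nSH => hST.
  suff : (S <= S :&: H k0)%MS by rewrite sub_capmx => /andP[].
  apply: (nakayama _ _ hB2).
    apply: submx_trans hST _; rewrite !addsmx_sub addsmxSr addsmxSl !andbT.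
    apply: submx_trans (addsmxSl _ _); rewrite sub_capmx B1S addsmxSr //.
  rewrite sub_capmx; apply/andP; split.
    exact: submx_trans (submxMr _ (capmxSl _ _)) SB2.
  exact: submx_trans (submxMr _ (capmxSr _ _)) (HB2 _).
case/row_subPn: nST => i ngT; set g := row i S in ngT.
have gS : (g <= S)%MS by exact: row_sub.
pose D := (S :\: (T + g))%MS.
pose S1 := (T + D)%MS.
have S1S : (S1 <= S)%MS by rewrite addsmx_sub TS diffmxSl.
have TS1 : (T <= S1)%MS by exact: addsmxSl.
have ngS1 : ~~ (g <= S1)%MS.
  apply: contra ngT => /sub_addsmxP[[u1 u2] /= hg].
  have hd : (u2 *m D <= D :&: (T + g))%MS.
    rewrite sub_capmx submxMl /=.
    have -> : u2 *m D = g - u1 *m T by rewrite hg addrC addKr.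
    by rewrite subB ?addsmxSr // (submx_trans (submxMl _ _) (addsmxSl _ _)).
  move: hd; rewrite capmx_diff submx0 => /eqP hd.
  by rewrite hg hd addr0 submxMl.
have cover : (S <= <<g>> + S1)%MS.
  have := addsmx_diff_cap_eq S (T + g)%MS; move/eqmxP; case/andP => _.
  move/submx_trans; apply.
  have TgS : (T + g <= S)%MS by rewrite addsmx_sub TS gS.
  rewrite addsmx_sub; apply/andP; split.
    exact: submx_trans (addsmxSr _ _) (addsmxSr _ _).
  have /capmx_idPr -> := TgS.
  rewrite addsmx_sub (submx_trans TS1 (addsmxSr _ _)) /=.
  by apply: submx_trans (addsmxSl _ _); rewrite genmxE.
have dir : (<<g>> :&: S1 = 0)%MS.
  apply/eqP; rewrite -mxrank_eq0.
  have hle : ((<<g>> :&: S1) <= g)%MS by apply: submx_trans (capmxSl _ _) _; rewrite genmxE.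
  have := mxrank_leqif_sup hle; case=> hr heq.
  have : (\rank (<<g>> :&: S1) < \rank g)%N.
    rewrite ltn_neqAle hr andbT heq; apply: contra ngS1 => h.
    exact: submx_trans h (capmxSr _ _).
  by move: (rank_leq_row g); case: (\rank g) => [|[|]] // _; rewrite ltnS leqn0.
have dir' : (S1 :&: <<g>> = 0)%MS by rewrite capmxC.
have rS1 : (\rank S1 < \rank S)%N.
  have := mxrank_leqif_sup S1S; case=> hr heq.
  rewrite ltn_neqAle hr andbT heq; apply: contra ngS1 => h.
  exact: submx_trans gS h.
have B1S1 : (B1 <= S1)%MS.
  by apply: submx_trans TS1; rewrite /T -addsmxA addsmxSl.
have S1B2 : (S1 *m B2 <= S1)%MS.
  apply: submx_trans (submxMr _ S1S) _; apply: submx_trans TS1.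
  by rewrite /T addsmxC addsmxA addsmxSr.
have [F1 [w1 [/andP[hw1 hS1F1] hB1F1 hK1 hcyc1 [N1 hN1]]]] := IH S1 rS1 B1S1 S1B2.
pose Mg := pinvmx g *m w1.
pose F0 := proj_mx S1 <<g>>%MS *m F1 + proj_mx <<g>>%MS S1 *m Mg.
have q1 : forall A : 'M[F]_n, (A <= S1)%MS -> A *m F0 = A *m F1.
  move=> A hA; rewrite /F0 mulmxDr (mulmxA A) (mulmxA A) proj_mx_id // proj_mx_0 //.
  by rewrite mul0mx addr0.
have gne0 : g != 0 by apply: contraNneq ngT => ->; exact: sub0mx.
have q2 : g *m F0 = w1.
  have gG : (g <= <<g>>)%MS by rewrite genmxE.
  rewrite /F0 mulmxDr (mulmxA g) (mulmxA g) proj_mx_0 // proj_mx_id // mul0mx add0r.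
  rewrite /Mg mulmxA.
  have -> : g *m pinvmx g = 1%:M.
    have rf : row_free g by rewrite /row_free rank_rV gne0.
    apply: (row_free_inj rf); rewrite mulmxKpV // mul1mx //.
  by rewrite mul1mx.
have SF0 : (S *m F0 <= S1)%MS.
  apply: submx_trans (submxMr _ cover) _; rewrite addsmxMr addsmx_sub.
  apply/andP; split.
    by rewrite (eqmxMr _ (genmxE g)) q2.
  by rewrite q1 // hS1F1.
exists F0, g; split.
- by rewrite gS (submx_trans SF0 S1S).
- by rewrite q1 // hB1F1.
- move=> k; case hk : (S <= H k)%MS.
    exact: submx_trans (submxMr _ (capmxSl _ _)) (submx_trans SF0 (submx_trans S1S hk)).
  have kk0 : (k <= k0)%N by apply: maxk0; rewrite hk.
  have hsub : ((S :&: K k) <= S1 :&: K k)%MS.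
    rewrite sub_capmx capmxSr andbT; apply: submx_trans TS1.
    apply: submx_trans (addsmxSr _ _).
    rewrite sub_capmx capmxSl /=; apply: submx_trans (addsmxSl _ _).
    exact: submx_trans (capmxSr _ _) (Kmono kk0).
  rewrite q1; last exact: submx_trans hsub (capmxSl _ _).
  exact: submx_trans (submxMr _ hsub) (hK1 k).
- move=> U gU hU.
  pose U2 := ((U + B1) :&: S1)%MS.
  have hw1U2 : (w1 <= U2)%MS.
    rewrite sub_capmx hw1 andbT -q2.
    exact: submx_trans (submxMr _ gU) hU.
  have U2F : (U2 *m F0 <= U2)%MS.
    rewrite sub_capmx; apply/andP; split.
      apply: submx_trans (submxMr _ (capmxSl _ _)) _.
      rewrite addsmxMr addsmx_sub hU /=.
      by rewrite q1 //; exact: submx_trans hB1F1 (addsmxSr _ _).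
    by rewrite q1 ?capmxSr // (submx_trans (submxMr _ (capmxSr _ _)) hS1F1).
  have := hcyc1 U2 hw1U2.
  rewrite -q1 ?capmxSr // (submx_trans U2F (addsmxSl _ _)) => /(_ isT) hS1.
  apply: submx_trans cover _; rewrite addsmx_sub genmxE.
  rewrite (submx_trans gU (addsmxSl _ _)) /=.
  apply: submx_trans hS1 _; rewrite addsmx_sub capmxSl addsmxSr //.
- exists N1.+1 => a b.
  have hY : forall A : 'M[F]_n, (A <= S1)%MS ->
      A *m (a *: B2 + b *: F0) = A *m (a *: B2 + b *: F1).
    by move=> A hA; rewrite !mulmxDr -!scalemxAr q1.
  have hY1 : (S1 *m (a *: B2 + b *: F1) <= S1)%MS.
    by rewrite mulmxDr -!scalemxAr addmx_sub // scalemx_sub.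
  have SY : (S *m (a *: B2 + b *: F0) <= S1)%MS.
    rewrite mulmxDr -!scalemxAr addmx_sub // scalemx_sub //.
    apply: submx_trans TS1; rewrite /T addsmxC addsmxA addsmxSr //.
  rewrite mxpowS mulmxA (pow_agree hY hY1 _ SY).
  exact: submx_trans (submxMr _ SY) (hN1 a b).
Qed.

End Flag.

Lemma flag_all (F : fieldType) (n : nat) (B1 B2 : 'M[F]_n) m p2 :
  B1 ^+ m = 0 -> B2 ^+ p2 = 0 -> B1 *m B2 = B2 *m B1 ->
  forall r (S : 'M[F]_n), (\rank S <= r)%N -> (B1 <= S)%MS -> (S *m B2 <= S)%MS ->
  flag_prop B1 B2 S.
Proof.
move=> h1 h2 hc; elim=> [|r IHr] S hr B1S SB2.
  case: (boolP (S <= B1)%MS) => hS; first exact: flag_base.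
  apply: (flag_step h1 h2 hc) => // S1 hS1; by move: hr; rewrite leqn0 => /eqP hr0; rewrite hr0 in hS1.
case: (boolP (S <= B1)%MS) => hS; first exact: flag_base.
apply: (flag_step h1 h2 hc) => // S1 hS1 B1S1 S1B2; apply: IHr => //.
by rewrite -ltnS (leq_trans hS1 hr).
Qed.

Lemma cong_pow (F : fieldType) (n : nat) (B1 A B : 'M[F]_n) :
  (B1 *m A <= B1)%MS -> (A - B <= B1)%MS -> forall j, (A ^+ j - B ^+ j <= B1)%MS.
Proof.
move=> hA hAB; elim=> [|j IH]; first by rewrite subrr sub0mx.
have -> : A ^+ j.+1 - B ^+ j.+1 = (A ^+ j - B ^+ j) *m A + B ^+ j *m (A - B).
  by rewrite !mxpowSr mulmxBl mulmxBr addrA subrK.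
rewrite addmx_sub //; last exact: mulmx_sub.
case/submxP: IH => D ->; rewrite -mulmxA; exact: mulmx_sub.
Qed.

Lemma pow_sub (F : fieldType) (n : nat) (B1 Z : 'M[F]_n) :
  B1 *m Z = Z *m B1 -> (Z <= B1)%MS -> forall k, (Z ^+ k <= B1 ^+ k)%MS.
Proof.
move=> hc hZ; elim=> [|k IH]; first by [].
case/submxP: hZ => D hD; case/submxP: IH => E hE.
have hck : B1 *m Z ^+ k = Z ^+ k *m B1.
  have : GRing.comm B1 (Z ^+ k) by apply: commrX; rewrite /GRing.comm -!mulmxE hc.
  by rewrite /GRing.comm -!mulmxE.
rewrite mxpowS {1}hD -mulmxA hck hE -!mulmxA -mxpowSr !mulmxA; exact: submxMl.
Qed.

Theorem lemma7p3 (C : numClosedFieldType) (n : nat) (B1 B2 : 'M[C]_n)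
  (hB1 : nilpotent_mx B1) (hB2 : nilpotent_mx B2)
  (hcomm : B1 *m B2 = B2 *m B1) :
  exists (B2' : 'M[C]_n) (w : 'rV[C]_n),
    [/\ nilpotent_mx B2',
        B1 *m B2' = B2' *m B1,
        (forall a b : C, nilpotent_mx (a *: B2 + b *: B2')) &
        cyclic_pair B1 B2' w].
Proof.
case: hB1 => m hm; case: hB2 => p2 hp2.
have [F0 [w [/andP[_ _] hB1F hK hcyc [N hN]]]] :=
  flag_all hm hp2 hcomm (rank_leq_row (1%:M : 'M[C]_n)) (submx1 B1) (submx1 _).
have [X [_ x2 x3]] : exists X : 'M[C]_n, [/\ (B1 ^+ 0 *m X <= B1 ^+ 0)%MS,
   B1 ^+ 0 *m (X *m B1 - B1 *m X) = 0 & (B1 ^+ 0 *m (X - F0) <= B1 ^+ 1)%MS].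
  apply: (Lift_all (d := m)) => //; rewrite ?expr0 ?expr1 ?submx1 //.
  by move=> k; have := hK k; rewrite !(capmxC 1%:M) !capmx1.
move: x2 x3; rewrite expr0 expr1 !mul1mx => /eqP; rewrite subr_eq0 => /eqP x2 x3.
have comb : forall a b : C, nilpotent_mx (a *: B2 + b *: X).
  move=> a b; set Y := a *: B2 + b *: X; set Z := a *: B2 + b *: F0.
  have hY : (B1 *m Y <= B1)%MS.
    rewrite /Y mulmxDr -!scalemxAr addmx_sub // scalemx_sub //.
      by rewrite hcomm submxMl.
    by rewrite -x2 submxMl.
  have hYZ : (Y - Z <= B1)%MS.
    have -> : Y - Z = b *: (X - F0) by rewrite /Y /Z opprD addrACA subrr add0r scalerBr.
    exact: scalemx_sub.
  have hYN : (Y ^+ N <= B1)%MS.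
    rewrite -(subrK (Z ^+ N) (Y ^+ N)) addmx_sub //; first exact: cong_pow.
    by have := hN a b; rewrite mul1mx.
  have hcY : B1 *m Y ^+ N = Y ^+ N *m B1.
    have hc1 : B1 *m Y = Y *m B1.
      by rewrite /Y mulmxDr mulmxDl -!scalemxAr -!scalemxAl hcomm x2.
    have : GRing.comm B1 (Y ^+ N) by apply: commrX; rewrite /GRing.comm -!mulmxE hc1.
    by rewrite /GRing.comm -!mulmxE.
  exists (N * m)%N; rewrite exprM; apply/eqP; rewrite -submx0 -hm.
  exact: pow_sub.
exists X, w; split => //.
- have := comb 0 1; by rewrite scale0r add0r scale1r.
- move=> U wU UB1 UX.
  have h1 : (1%:M <= U + B1)%MS.
    apply: hcyc => //.
    have -> : U *m F0 = U *m X - U *m (X - F0) by rewrite mulmxBr opprB addrC subrK.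
    rewrite subB ?(submx_trans UX (addsmxSl _ _)) //.
    exact: submx_trans (mulmx_sub _ x3) (addsmxSr _ _).
  apply: (nakayama _ UB1 hm); by rewrite mul1mx.
Qed.
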